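(* Let $H$ be a real Hilbert space with inner product $(\cdot,\cdot)$ and norm $\|\cdot\|$, let $G:H\to H$ be a bounded, self-adjoint, positive definite linear operator, and let $\bar u,\epsilon\in H$ with $\|\epsilon\|\le\epsilon_0$. Let $\alpha>0$ and let $(u_j)_{j\ge0}$ be the Mitlar iterates with data $\bar u$: $[(1-\alpha)G+\alpha I]u_0=\bar u$ and $[(1-\alpha)G+\alpha I](u_j-u_{j-1})=\bar u-Gu_{j-1}$ for $j\ge1$. Define the noisy functional $E_\epsilon(v)=\frac12(Gv,v)-(\bar u+\epsilon,v)$ for $v\in H$. If for some $j\ge0$ we have $u_{j+1}\neq u_j$ and $$\frac{\epsilon_0}{\|u_{j+1}-u_j\|}\le\alpha\le\frac12,$$ then $E_\epsilon(u_{j+1})\le E_\epsilon(u_j)$.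
   Context: This is the setting of the noisy deconvolution problem $Gu=\bar u+\epsilon$, whose solution $u$ is the minimizer of $E_\epsilon$. *)

(* Defs.v *)
From HB Require Import structures.
From mathcomp Require Import all_boot all_order all_algebra.
From mathcomp Require Import all_classical all_reals all_analysis.
Set Implicit Arguments. Unset Strict Implicit. Unset Printing Implicit Defensive.
Import Order.TTheory GRing.Theory Num.Theory.
Local Open Scope ring_scope.

Section Hilbert.
Variables (R : realType) (V : completeNormedModType R).

(* ip is a real inner product on V inducing the norm of V; since V is
   complete, (V, ip) is a real Hilbert space. *)
Definition is_inner_product (ip : V -> V -> R) : Prop :=
  [/\ (forall u v, ip u v = ip v u),
      (forall (a : R) u v w, ip (a *: u + v) w = a * ip u w + ip v w),
      (forall v, 0 <= ip v v),
      (forall v, ip v v = 0 -> v = 0)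
    & (forall v, `|v| = Num.sqrt (ip v v))].

Definition bounded_linear (G : V -> V) : Prop :=
  (forall (a : R) u v, G (a *: u + v) = a *: G u + G v) /\
  exists C : R, forall v, `|G v| <= C * `|v|.

Definition self_adjoint (ip : V -> V -> R) (G : V -> V) : Prop :=
  forall u v, ip (G u) v = ip u (G v).

Definition positive_definite (ip : V -> V -> R) (G : V -> V) : Prop :=
  forall v, v != 0 -> 0 < ip (G v) v.

Definition mitlar_iterates (G : V -> V) (alpha : R) (ubar : V) (u : nat -> V)
  : Prop :=
  (1 - alpha) *: G (u 0%N) + alpha *: u 0%N = ubar /\
  forall j : nat,
    (1 - alpha) *: G (u j.+1 - u j) + alpha *: (u j.+1 - u j) = ubar - G (u j).

Definition E_noisy (ip : V -> V -> R) (G : V -> V) (ubar eps : V) (v : V) : R :=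
  2^-1 * ip (G v) v - ip (ubar + eps) v.

End Hilbert.

(* Main.v *)
Require Import Defs.
From HB Require Import structures.
From mathcomp Require Import all_boot all_order all_algebra.
From mathcomp Require Import all_classical all_reals all_analysis.
From mathcomp Require Import ring lra.
Import Order.TTheory GRing.Theory Num.Theory.
Local Open Scope ring_scope.

Theorem mainTheorem10 (R : realType) (V : completeNormedModType R)
  (ip : V -> V -> R) (G : V -> V) (ubar eps : V) (eps0 alpha : R)
  (u : nat -> V) (j : nat) :
  is_inner_product ip ->
  bounded_linear G ->
  self_adjoint ip G ->
  positive_definite ip G ->
  `|eps| <= eps0 ->
  0 < alpha ->
  mitlar_iterates G alpha ubar u ->
  u j.+1 != u j ->
  eps0 / `|u j.+1 - u j| <= alpha ->
  alpha <= 2^-1 ->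
  E_noisy ip G ubar eps (u j.+1) <= E_noisy ip G ubar eps (u j).
Proof.
move=> [ipC ipL ip0 ipdef ipn] [GL _] Gsa Gpd heps ha [_ hm] hne hq ha2.
have ip0l : forall z, ip 0 z = 0.
  move=> z; have := ipL 1 0 0 z; rewrite scale1r addr0 mul1r => h; lra.
have ipD : forall x y z, ip (x + y) z = ip x z + ip y z.
  by move=> x y z; have := ipL 1 x y z; rewrite scale1r mul1r.
have ipZ : forall a x z, ip (a *: x) z = a * ip x z.
  by move=> a x z; rewrite -[a *: x]addr0 ipL ip0l addr0.
have ipDr : forall x y z, ip z (x + y) = ip z x + ip z y.
  by move=> x y z; rewrite ipC ipD ![ip _ z]ipC.
have ipZr : forall a x z, ip z (a *: x) = a * ip z x.
  by move=> a x z; rewrite ipC ipZ ipC.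
have GD : forall x y, G (x + y) = G x + G y.
  by move=> x y; have := GL 1 x y; rewrite !scale1r.
have G0 : G 0 = 0.
  by have := GD 0 0; rewrite addr0 => /eqP; rewrite -subr_eq0 opprD addrA subrr add0r oppr_eq0 => /eqP.
have GZ : forall a x, G (a *: x) = a *: G x.
  by move=> a x; rewrite -[a *: x]addr0 GL G0 addr0.
have nsq : forall x, `|x| ^+ 2 = ip x x.
  by move=> x; rewrite ipn sqr_sqrtr.
set w := u j; set d := u j.+1 - u j.
have hu1 : u j.+1 = w + d by rewrite /d /w addrC subrK.
have hub : ubar = (1 - alpha) *: G d + alpha *: d + G w.
  by rewrite (hm j) subrK.
have dne : d != 0 by rewrite /d subr_eq0.
have nd0' : 0 < `|d| by rewrite normr_gt0.
have e0a : eps0 <= alpha * `|d|.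
  by move: hq; rewrite -/d ler_pdivrMr.
clearbody d w.
have gg0 : 0 < ip (G d) d := Gpd d dne.
have nd0 : 0 < `|d| by rewrite normr_gt0.
have hee : ip eps eps <= alpha ^+ 2 * ip d d.
  rewrite -!nsq -exprMn; apply: lerXn2r; rewrite ?nnegrE ?mulr_ge0 //; lra.
have hpos := ip0 (eps + alpha *: d).
rewrite ipD !ipDr !ipZ !ipZr in hpos.
rewrite /E_noisy hu1 hub !GD ?GZ !ipD !ipDr ?ipZ ?ipZr.
rewrite (ipC d eps) in hpos.
set gg := ip (G d) d in gg0 *; set dd := ip d d in hee hpos *.
set ed := ip eps d in hpos *.
have dd0 : 0 <= dd by apply: ip0.
have : - ed <= alpha * dd.
  have h2 : 0 <= alpha * (2 * (ed + alpha * dd)).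
    have -> : alpha * (2 * (ed + alpha * dd)) =
      (ip eps eps + alpha * ed + (alpha * ed + alpha * (alpha * dd)))
      + (alpha ^+ 2 * dd - ip eps eps) by rewrite expr2; ring.
    by apply: addr_ge0 => //; rewrite subr_ge0.
  rewrite pmulr_rge0 // in h2; lra.
move=> h.
have : (alpha - 2^-1) * gg <= 0 by apply: mulr_le0_ge0; lra.
rewrite (Gsa d w) (ipC d (G w)) => hg.
clearbody gg dd ed.
rewrite -subr_ge0.
set e := (X in 0 <= X).
have -> : e = - ((alpha - 2^-1) * gg) + (alpha * dd + ed) by rewrite /e; field.
apply: addr_ge0; rewrite ?oppr_ge0 //; rewrite -subr_ge0 opprK addrC in h.
by rewrite addrC.
Qed.
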